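(* Let $S$ be a regular semigroup and let $\phi:\mathcal G\to S^1$ be a skeleton mapping on $X$. Then for every $g\in\mathcal G_i$ with $i\ge2$, the elements $g^{\phi,l}$ and $g^{\phi,r}$ are idempotents of $S$.
   Context: Let $X$ be a nonempty set and $X'=\{x':x\in X\}$ a disjoint copy of $X$; let $1$ be a new symbol and $A=X\cup X'\cup\{1\}$ (the anchors), with the involution $1'=1$, $(x)'=x'$, $(x')'=x$ for $x\in X$. For a 5-tuple $g$ write $g=(g^l,g^{la},g^c,g^{ra},g^r)$ (left entry, left anchor, middle entry, right anchor, right entry); the notation iterates, e.g. for $s\in\{l,r\}$, $g^{ls}$ is the $s$-entry of $g^l$ and $g^{lsa}$ is the $s$-anchor of $g^l$. Define $\mathcal G_0=\{1\}$; $\mathcal G_{1,e}=\{g_{xx'}:x\in X\}$ where $g_{xx'}=(1,1,xx',x',1)$ (the middle entry is a formal symbol), and $\mathcal G_{1,d}=\emptyset$. For $i\ge 2$: $\mathcal G_{i,e}=\{(g,(g^{la})',g^l,(g^{ra})',g),\ (g,(g^{ra})',g^l,(g^{la})',g) : g\in\mathcal G_{i-1,e}\}$, and $\mathcal G_{i,d}$ is the set of all $g\in\mathcal G_{i-1}\times A\times\mathcal G_{i-2}\times A\times\mathcal G_{i-1}$ such that $g^l\neq g^r$, $(g^c,g^{la})=(g^{ls},(g^{lsa})')$ for some $s\in\{l,r\}$, and $(g^c,g^{ra})=(g^{rt},(g^{rta})')$ for some $t\in\{l,r\}$; here $\mathcal G_i=\mathcal G_{i,d}\cup\mathcal G_{i,e}$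 for $i\ge1$. Put $\mathcal G^5=\bigcup_{i\ge1}\mathcal G_i$, $\mathcal G=\mathcal G^5\cup A$ (the symbol $1$ is used both as an anchor and as an element of $\mathcal G_0$). $S^1$ denotes $S$ with an identity adjoined if necessary. For a mapping $\phi:\mathcal G\to S^1$ and $g\in\mathcal G^5$ of height $\ge2$ put $g^{\phi,l}=(g^c\phi)((g^{la})'\phi)(g^l\phi)(g^{la}\phi)$ and $g^{\phi,r}=((g^{ra})'\phi)(g^r\phi)(g^{ra}\phi)(g^c\phi)$. For elements $a,b$ of a regular semigroup $T$, the sandwich set is $S(a,b)=\{h\in E(T): (bb')h=h=h(a'a),\ (a'a)h(bb')=(a'a)(bb')\}$ for any inverses $a'$ of $a$, $b'$ of $b$ (independent of the choice). A skeleton mapping (on $X$) is a mapping $\phi:\mathcal G\to S^1$, $S$ a regular semigroup, such that: (i) for every $x\in X$, $x\phi\in S$, $x'\phi$ is an inverse of $x\phi$ (i.e. $(x\phi)(x'\phi)(x\phi)=x\phi$ and $(x'\phi)(x\phi)(x'\phi)=x'\phi$), and $g_{xx'}\phi=(x\phi)(x'\phi)$; (ii) $(1\phi)(a\phi)=a\phi=(a\phi)(1\phi)$ for all $a\in A$; (iii) $g\phi\in S(g^{\phi,r},g^{\phi,l})$ for every $g\in\mathcal G_i$ with $i\ge2$. *)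

(* Defs.v *)
Set Implicit Arguments.

Inductive anchor (X : Type) : Type :=
| aone : anchor X
| ax   : X -> anchor X
| ax'  : X -> anchor X.
Arguments aone {X}.

Definition ainv {X : Type} (a : anchor X) : anchor X :=
  match a with
  | aone => aone
  | ax x => ax' x
  | ax' x => ax x
  end.

Inductive gterm (X : Type) : Type :=
| GA   : anchor X -> gterm X                     (* an anchor (1 also = element of G_0) *)
| Gsym : X -> gterm X                            (* the formal middle symbol xx' *)
| G5   : gterm X -> anchor X -> gterm X -> anchor X -> gterm X -> gterm X.
           (* (g^l, g^la, g^c, g^ra, g^r) *)

Inductive side := sL | sR.

(* projections (defaults on non-5-tuples are never used on elements of G_i, i>=1) *)
Definition gl {X} (g : gterm X) : gterm X :=
  match g with G5 l _ _ _ _ => l | _ => GA aone end.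
Definition gla {X} (g : gterm X) : anchor X :=
  match g with G5 _ la _ _ _ => la | _ => aone end.
Definition gc {X} (g : gterm X) : gterm X :=
  match g with G5 _ _ c _ _ => c | _ => GA aone end.
Definition gra {X} (g : gterm X) : anchor X :=
  match g with G5 _ _ _ ra _ => ra | _ => aone end.
Definition gr {X} (g : gterm X) : gterm X :=
  match g with G5 _ _ _ _ r => r | _ => GA aone end.

Definition gent {X} (s : side) (g : gterm X) : gterm X :=
  match s with sL => gl g | sR => gr g end.
Definition ganc {X} (s : side) (g : gterm X) : anchor X :=
  match s with sL => gla g | sR => gra g end.

Definition gxx {X} (x : X) : gterm X := G5 (GA aone) aone (Gsym x) (ax' x) (GA aone).

(* G_{i,e} (only meaningful for i >= 1) *)
Fixpoint Ge {X} (i : nat) (g : gterm X) : Prop :=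
  match i with
  | 0 => False
  | S j =>
      match j with
      | 0 => exists x : X, g = gxx x
      | S _ => exists h, Ge j h /\
                 (g = G5 h (ainv (gla h)) (gl h) (ainv (gra h)) h \/
                  g = G5 h (ainv (gra h)) (gl h) (ainv (gla h)) h)
      end
  end.

(* the defining condition of G_{i,d}, given G_{i-1} (= P) and G_{i-2} (= Q) *)
Definition Gd_cond {X} (P Q : gterm X -> Prop) (g : gterm X) : Prop :=
  exists l la c ra r, g = G5 l la c ra r /\ P l /\ Q c /\ P r /\
    l <> r /\
    (exists s, c = gent s l /\ la = ainv (ganc s l)) /\
    (exists t, c = gent t r /\ ra = ainv (ganc t r)).

Fixpoint Gs {X} (i : nat) : gterm X -> Prop :=
  match i with
  | 0 => fun g => g = GA aone
  | S j =>
      match j with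
      | 0 => fun g => Ge 1 g
      | S k => fun g => Ge (S j) g \/ Gd_cond (Gs j) (Gs k) g
      end
  end.

(* ---------- S^1 with S a regular semigroup ----------
   M plays the role of S^1, a monoid (mul, one); inS carves out S,
   which is closed under mul, regular, and M \ S ⊆ {one}. *)
Definition is_S1_of_regular (M : Type) (mul : M -> M -> M) (one : M)
  (inS : M -> Prop) : Prop :=
  (forall a b c, mul (mul a b) c = mul a (mul b c)) /\
  (forall a, mul one a = a /\ mul a one = a) /\
  (forall a b, inS a -> inS b -> inS (mul a b)) /\
  (forall a, inS a \/ a = one) /\
  (forall a, inS a -> exists b, inS b /\ mul (mul a b) a = a /\ mul (mul b a) b = b).

Definition is_inverse {M} (mul : M -> M -> M) (a a' : M) : Prop :=
  mul (mul a a') a = a /\ mul (mul a' a) a' = a'.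

Definition idempotent {M} (mul : M -> M -> M) (e : M) : Prop := mul e e = e.

(* sandwich set S(a,b), taken in the regular semigroup T = S^1 *)
Definition sandwich {M} (mul : M -> M -> M) (a b h : M) : Prop :=
  idempotent mul h /\
  exists a' b', is_inverse mul a a' /\ is_inverse mul b b' /\
    mul (mul b b') h = h /\ h = mul h (mul a' a) /\
    mul (mul (mul a' a) h) (mul b b') = mul (mul a' a) (mul b b').

Definition gphil {X M} (mul : M -> M -> M) (phi : gterm X -> M) (g : gterm X) : M :=
  mul (mul (mul (phi (gc g)) (phi (GA (ainv (gla g))))) (phi (gl g))) (phi (GA (gla g))).
Definition gphir {X M} (mul : M -> M -> M) (phi : gterm X -> M) (g : gterm X) : M :=
  mul (mul (mul (phi (GA (ainv (gra g)))) (phi (gr g))) (phi (GA (gra g)))) (phi (gc g)).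

(* skeleton mapping (phi is total on gterm; only its values on 𝒢 matter) *)
Definition skeleton {X M} (mul : M -> M -> M) (inS : M -> Prop)
  (phi : gterm X -> M) : Prop :=
  (forall x : X, inS (phi (GA (ax x))) /\
     is_inverse mul (phi (GA (ax x))) (phi (GA (ax' x))) /\
     phi (gxx x) = mul (phi (GA (ax x))) (phi (GA (ax' x)))) /\
  (forall a : anchor X, mul (phi (GA aone)) (phi (GA a)) = phi (GA a) /\
                        mul (phi (GA a)) (phi (GA aone)) = phi (GA a)) /\
  (forall (i : nat) (g : gterm X), 2 <= i -> Gs i g ->
     sandwich mul (gphir mul phi g) (gphil mul phi g) (phi g)).

(* Main.v *)
Require Import Defs.
From Stdlib Require Import Setoid.
Lemma core (M : Type) (mul : M -> M -> M)
  (HA : forall a b c, mul (mul a b) c = mul a (mul b c)) (e c U0 U1 : M) :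
  mul c c = c -> mul (mul c U0) e = e -> mul e (mul U1 c) = e -> mul e e = e ->
  mul (mul e U0) e = e /\ mul (mul e U1) e = e.
Proof.
  intros Hc Hl Hr He.
  assert (E: mul (mul e (mul U1 c)) (mul (mul c U0) e) = e) by (rewrite Hr, Hl; exact He).
  assert (H1 : mul (mul e U1) e = e).
  { rewrite <- E at 3. rewrite !HA. rewrite <- (HA c c), Hc. rewrite <- (HA c U0), Hl.
    reflexivity. }
  split; [|exact H1].
  rewrite <- Hr at 1. rewrite !HA. rewrite <- (HA c U0), Hl. rewrite <- HA. exact H1.
Qed.

Lemma ainv_inv {X} (a : anchor X) : ainv (ainv a) = a.
Proof. destruct a; reflexivity. Qed.

Lemma Ge_lr {X} (i : nat) (h : gterm X) : Ge i h -> gl h = gr h.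
Proof.
  destruct i as [|[|j]]; simpl; [tauto| |].
  - intros [x ->]; reflexivity.
  - intros [h' [_ [-> | ->]]]; reflexivity.
Qed.

Lemma Ge_Gs {X} (i : nat) (h : gterm X) : Ge i h -> Gs i h.
Proof.
  destruct i as [|[|j]]; [simpl; tauto| exact (fun H => H) |].
  intro H; left; exact H.
Qed.

Lemma Ge_gl {X} (n : nat) (h : gterm X) : Ge (S n) h -> Gs n (gl h).
Proof.
  destruct n as [|n].
  - simpl. intros [x ->]; reflexivity.
  - intros H. destruct n as [|n]; simpl in H;
    destruct H as [h' [Hh' [-> | ->]]]; simpl; first [exact Hh' | left; exact Hh'].
Qed.

Lemma decomp {X} (n : nat) (g : gterm X) : Gs (S (S n)) g ->
  exists l r s t, Gs (S n) l /\ Gs (S n) r /\ Gs n (gent s l) /\ gent s l = gent t r /\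
    g = G5 l (ainv (ganc s l)) (gent s l) (ainv (ganc t r)) r.
Proof.
  intros [He | Hd].
  - destruct He as [h [Hh [-> | ->]]].
    + exists h, h, sL, sR. pose proof (Ge_lr _ _ Hh) as E.
      split; [apply Ge_Gs; exact Hh|]. split; [apply Ge_Gs; exact Hh|].
      split; [exact (Ge_gl _ _ Hh)|]. split; [exact E|]. reflexivity.
    + exists h, h, sR, sL. pose proof (Ge_lr _ _ Hh) as E.
      split; [apply Ge_Gs; exact Hh|]. split; [apply Ge_Gs; exact Hh|].
      split; [simpl; rewrite <- E; exact (Ge_gl _ _ Hh)|]. split; [symmetry; exact E|].
      simpl. rewrite <- E. reflexivity.
  - destruct Hd as [l [la [c [ra [r [-> [Hl [Hc [Hr [_ [[s [Es Ea]] [t [Et Eb]]]]]]]]]]]]].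
    exists l, r, s, t. subst. repeat split; auto.
Qed.

Definition U {X M} (mul : M -> M -> M) (phi : gterm X -> M) (s : side) (m : gterm X) : M :=
  mul (mul (phi (GA (ainv (ganc s m)))) (phi (gent s m))) (phi (GA (ganc s m))).

Lemma inS_l M (mul : M -> M -> M) one inS (HS : is_S1_of_regular mul one inS) a b :
  inS a -> inS (mul a b).
Proof.
  destruct HS as [_ [Hone [Hcl [Hor _]]]]. intros Ha.
  destruct (Hor b) as [Hb | ->]; [apply Hcl; auto | rewrite (proj2 (Hone a)); exact Ha].
Qed.

Lemma inS_r M (mul : M -> M -> M) one inS (HS : is_S1_of_regular mul one inS) a b :
  inS b -> inS (mul a b).
Proof.
  destruct HS as [_ [Hone [Hcl [Hor _]]]]. intros Hb.
  destruct (Hor a) as [Ha | ->]; [apply Hcl; auto | rewrite (proj1 (Hone b)); exact Hb].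
Qed.

Lemma idem_Gs X M (mul : M -> M -> M) one inS (HS : is_S1_of_regular mul one inS)
  (phi : gterm X -> M) (Hphi : skeleton mul inS phi) n m :
  Gs n m -> idempotent mul (phi m).
Proof.
  destruct HS as [HA _]. destruct Hphi as [H1 [H2 H3]].
  destruct n as [|[|n]].
  - simpl. intros ->. exact (proj1 (H2 aone)).
  - simpl. intros [x ->]. destruct (H1 x) as [_ [[Hi _] E]]. unfold idempotent.
    rewrite E. rewrite <- HA. rewrite Hi. reflexivity.
  - intros H. apply (H3 (S (S n))); [apply le_n_S, le_n_S, le_0_n | exact H].
Qed.

Definition Inv {X M} (mul : M -> M -> M) inS (phi : gterm X -> M) (n : nat) : Prop :=
  forall m, Gs (S n) m -> inS (phi m) /\
    mul (mul (phi m) (U mul phi sL m)) (phi m) = phi m /\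
    mul (mul (phi m) (U mul phi sR m)) (phi m) = phi m.

Lemma step X M (mul : M -> M -> M) one inS (HS : is_S1_of_regular mul one inS)
  (phi : gterm X -> M) (Hphi : skeleton mul inS phi) n :
  Inv mul inS phi n -> forall g, Gs (S (S n)) g ->
    (inS (gphil mul phi g) /\ idempotent mul (gphil mul phi g)) /\
    (inS (gphir mul phi g) /\ idempotent mul (gphir mul phi g)).
Proof.
  intros IH g Hg. pose proof HS as HS'. destruct HS' as [HA _].
  destruct (decomp _ _ Hg) as [l [r [s [t [Hl [Hr [Hc [Ec ->]]]]]]]].
  destruct (IH l Hl) as [Sl [Cl1 Cl2]]. destruct (IH r Hr) as [Sr [Cr1 Cr2]].
  assert (Cl : mul (mul (phi l) (U mul phi s l)) (phi l) = phi l) by (destruct s; auto).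
  assert (Cr : mul (mul (phi r) (U mul phi t r)) (phi r) = phi r) by (destruct t; auto).
  clear Cl1 Cl2 Cr1 Cr2.
  unfold gphil, gphir; cbn [gc gla gl gra gr]. rewrite !ainv_inv.
  unfold U in Cl, Cr. rewrite Ec. rewrite Ec in Cl.
  set (f := phi (gent t r)) in *.
  set (a := phi (GA (ganc s l))) in *. set (as_ := phi (GA (ainv (ganc s l)))) in *.
  set (b := phi (GA (ganc t r))) in *. set (bs := phi (GA (ainv (ganc t r)))) in *.
  set (e := phi l) in *. set (e' := phi r) in *.
  assert (Clz : forall z, mul e (mul as_ (mul f (mul a (mul e z)))) = mul e z).
  { intros z. pose proof (f_equal (fun w => mul w z) Cl) as H; simpl in H; rewrite !HA in H; exact H. }
  assert (Crz : forall z, mul e' (mul bs (mul f (mul b (mul e' z)))) = mul e' z).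
  { intros z. pose proof (f_equal (fun w => mul w z) Cr) as H; simpl in H; rewrite !HA in H; exact H. }
  split; split.
  - apply (inS_l _ _ _ _ HS). apply (inS_r _ _ _ _ HS). exact Sl.
  - unfold idempotent. rewrite !HA. rewrite Clz. reflexivity.
  - apply (inS_l _ _ _ _ HS). apply (inS_l _ _ _ _ HS). apply (inS_r _ _ _ _ HS). exact Sr.
  - unfold idempotent. rewrite !HA. rewrite Crz. reflexivity.
Qed.

Lemma Inv_all X M (mul : M -> M -> M) one inS (HS : is_S1_of_regular mul one inS)
  (phi : gterm X -> M) (Hphi : skeleton mul inS phi) n : Inv mul inS phi n.
Proof.
  pose proof HS as HS'. destruct HS' as [HA _].
  pose proof Hphi as Hphi'. destruct Hphi' as [H1 [H2 H3]].
  induction n as [|n IH].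
  - intros m [x ->]. destruct (H1 x) as [Sx [[Hi1 Hi2] E]].
    unfold U; cbn [ganc gent gla gra gl gr gxx ainv]. rewrite E.
    destruct (H2 (ax' x)) as [_ R1']. destruct (H2 (ax x)) as [_ R1].
    split; [apply (inS_l _ _ _ _ HS); exact Sx|].
    split.
    + rewrite !HA. rewrite <- (HA (phi (GA (ax' x))) (phi (GA aone))), R1'.
      rewrite <- (HA (phi (GA (ax' x))) (phi (GA aone))), R1'.
      rewrite <- (HA (phi (GA (ax' x))) (phi (GA aone))), R1'.
      rewrite <- (HA (phi (GA (ax x))) (phi (GA (ax' x)))), <- HA, Hi1. reflexivity.
    + rewrite !HA. rewrite <- (HA (phi (GA (ax x))) (phi (GA aone))), R1.
      rewrite <- (HA (phi (GA (ax x))) (phi (GA (ax' x)))), <- HA, Hi1.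
      rewrite <- (HA (phi (GA (ax x))) (phi (GA (ax' x)))), <- HA, Hi1. reflexivity.
  - intros m Hm.
    destruct (step _ _ _ _ _ HS phi Hphi n IH m Hm) as [[SB IB] [SA IA]].
    destruct (decomp _ _ Hm) as [l [r [s [t [_ [_ [Hc [_ Em]]]]]]]].
    assert (Ic : idempotent mul (phi (gc m))).
    { rewrite Em. exact (idem_Gs _ _ _ _ _ HS phi Hphi n _ Hc). }
    destruct (H3 (S (S n)) m (le_n_S _ _ (le_n_S _ _ (le_0_n _))) Hm)
      as [Ie [A' [B' [[HA1 HA2] [[HB1 HB2] [E1 [E2 _]]]]]]].
    set (A := gphir mul phi m) in *. set (B := gphil mul phi m) in *.
    set (e := phi m) in *.
    assert (Be : mul B e = e).
    { rewrite <- E1. rewrite <- HA. unfold idempotent in IB. rewrite <- HA, IB. reflexivity. }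
    assert (eA : mul e A = e).
    { rewrite E2 at 1. rewrite HA, HA. unfold idempotent in IA. rewrite IA. symmetry. exact E2. }
    assert (Bd : B = mul (phi (gc m)) (U mul phi sL m)).
    { unfold B, gphil, U. cbn [ganc gent]. rewrite !HA. reflexivity. }
    assert (Ad : A = mul (U mul phi sR m) (phi (gc m))).
    { unfold A, gphir, U. cbn [ganc gent]. reflexivity. }
    rewrite Bd in Be. rewrite Ad in eA.
    destruct (core _ _ HA e (phi (gc m)) (U mul phi sL m) (U mul phi sR m) Ic Be eA Ie)
      as [C0 C1].
    split; [|split; assumption].
    rewrite <- Be. apply (inS_l _ _ _ _ HS). rewrite <- Bd. exact SB.
Qed.

Theorem lemma6p1 (X : Type) (HX : inhabited X)
  (M : Type) (mul : M -> M -> M) (one : M) (inS : M -> Prop)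
  (HS : is_S1_of_regular mul one inS)
  (phi : gterm X -> M) (Hphi : skeleton mul inS phi) :
  forall (i : nat) (g : gterm X), 2 <= i -> Gs i g ->
    (inS (gphil mul phi g) /\ idempotent mul (gphil mul phi g)) /\
    (inS (gphir mul phi g) /\ idempotent mul (gphir mul phi g)).
Proof.
  intros i g Hi Hg.
  destruct i as [|[|n]]; [inversion Hi | inversion Hi; inversion H0 |].
  exact (step _ _ _ _ _ HS phi Hphi n (Inv_all _ _ _ _ _ HS phi Hphi n) g Hg).
Qed.
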